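(* In the $n$-body problem in ${\bf H}^2$ ($n\ge2$, masses $m_i>0$), there is no solution defined for all $t\in\mathbb R$ of the form ${\bf q}_i(t)=(0,\sinh(\omega t+\alpha_i),\cosh(\omega t+\alpha_i))$, $i=1,\dots,n$, with constants $\omega\ne0$ and $\alpha_i$ (the $\alpha_i$ pairwise distinct, so that the configuration is collisionless); that is, there are no hyperbolic relative equilibria along the fixed geodesic $x=0$. Since Lorentz transformations preserving ${\bf H}^2$ map any geodesic to $x=0$ and preserve the equations, the same holds along any fixed geodesic.
   Context: The $n$-body problem in ${\bf H}^2$ (Weierstrass model): with the Lorentz inner product ${\bf a}\boxdot{\bf b}=a_xb_x+a_yb_y-a_zb_z$ on $\mathbb R^3$, ${\bf H}^2=\{(x,y,z): x^2+y^2-z^2=-1,\ z>0\}$. Bodies of masses $m_1,\dots,m_n>0$ have positions ${\bf q}_i=(x_i,y_i,z_i)\in{\bf H}^2$ and satisfy $$\ddot{\bf q}_i=\sum_{j\ne i}\frac{m_j[{\bf q}_j+({\bf q}_i\boxdot{\bf q}_j){\bf q}_i]}{[({\bf q}_i\boxdot{\bf q}_j)^2-1]^{3/2}}+(\dot{\bf q}_i\boxdot\dot{\bf q}_i){\bf q}_i,\qquad {\bf q}_i\boxdot{\bf q}_i=-1,\ \ {\bf q}_i\boxdot\dot{\bf q}_i=0,$$ $i=1,\dots,n$, defined only for collisionless configurations. Geodesics of ${\bf H}^2$ are its intersections with planes through the origin. A hyperbolic relative equilibrium is a solution defined for all $t\in\mathbb R$ with $x_i$ constant, $y_i=\rho_i\sinh(\omega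 t+\alpha_i)$, $z_i=\rho_i\cosh(\omega t+\alpha_i)$, constants $\omega,\alpha_i$, $\rho_i=(1+x_i^2)^{1/2}$. *)

(* Defs.v *)
From Stdlib Require Export Reals Lra Lia List.
Open Scope R_scope.

Record V3 := mkV3 { vx : R; vy : R; vz : R }.

Definition vadd (a b : V3) : V3 := mkV3 (vx a + vx b) (vy a + vy b) (vz a + vz b).
Definition vscale (c : R) (a : V3) : V3 := mkV3 (c * vx a) (c * vy a) (c * vz a).
Definition vzero : V3 := mkV3 0 0 0.

Definition lor (a b : V3) : R := vx a * vx b + vy a * vy b - vz a * vz b.

Definition inH2 (a : V3) : Prop := lor a a = -1 /\ 0 < vz a.

Definition has_deriv (f f' : R -> V3) : Prop :=
  forall t, derivable_pt_lim (fun s => vx (f s)) t (vx (f' t)) /\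
            derivable_pt_lim (fun s => vy (f s)) t (vy (f' t)) /\
            derivable_pt_lim (fun s => vz (f s)) t (vz (f' t)).

Fixpoint vsum (n : nat) (F : nat -> V3) : V3 :=
  match n with
  | O => vzero
  | S k => vadd (vsum k F) (F k)
  end.

Definition force (n : nat) (m : nat -> R) (Q : nat -> V3) (i : nat) : V3 :=
  vsum n (fun j =>
    if Nat.eqb j i then vzero
    else vscale (m j / Rpower ((lor (Q i) (Q j))^2 - 1) (3/2))
                (vadd (Q j) (vscale (lor (Q i) (Q j)) (Q i)))).

Definition is_solution (n : nat) (m : nat -> R) (q : nat -> R -> V3) : Prop :=
  exists v a : nat -> R -> V3,
    forall i, (i < n)%nat ->
      has_deriv (q i) (v i) /\ has_deriv (v i) (a i) /\
      forall t,
        inH2 (q i t) /\ lor (q i t) (v i t) = 0 /\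
        (forall j, (j < n)%nat -> j <> i -> q i t <> q j t) /\
        a i t = vadd (force n m (fun j => q j t) i)
                     (vscale (lor (v i t) (v i t)) (q i t)).

(* Main.v *)
Require Import Defs.
From Stdlib Require Import Reals.
From Stdlib Require Import FunctionalExtensionality.
Open Scope R_scope.

Lemma lin_deriv (w a t : R) : derivable_pt_lim (fun s => w * s + a) t w.
Proof.
  assert (H : derivable_pt_lim (plus_fct (fun s => w * s) (fun _ => a)) t (w * 1 + 0)).
  2: { replace (w * 1 + 0) with w in H by ring. exact H. }
  apply (derivable_pt_lim_plus (fun s => w * s) (fun _ => a)).
  - apply (derivable_pt_lim_scal (fun s => s)). apply derivable_pt_lim_id.
  - apply derivable_pt_lim_const.
Qed.

Lemma sinh_lin (w a t : R) :
  derivable_pt_lim (fun s => sinh (w * s + a)) t (w * cosh (w * t + a)).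
Proof.
  rewrite Rmult_comm.
  apply (derivable_pt_lim_comp (fun s => w * s + a) sinh).
  - apply lin_deriv.
  - apply derivable_pt_lim_sinh.
Qed.

Lemma cosh_lin (w a t : R) :
  derivable_pt_lim (fun s => cosh (w * s + a)) t (w * sinh (w * t + a)).
Proof.
  rewrite Rmult_comm.
  apply (derivable_pt_lim_comp (fun s => w * s + a) cosh).
  - apply lin_deriv.
  - apply derivable_pt_lim_cosh.
Qed.

Lemma sinh0 : sinh 0 = 0.
Proof. unfold sinh. rewrite Ropp_0, exp_0. field. Qed.

Lemma vy_vsum_nonpos (F : nat -> V3) k :
  (forall j, (j < k)%nat -> vy (F j) <= 0) -> vy (vsum k F) <= 0.
Proof.
  induction k; intros H; simpl. lra.
  assert (vy (vsum k F) <= 0) by (apply IHk; intros; apply H; lia).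
  assert (vy (F k) <= 0) by (apply H; lia). lra.
Qed.

Lemma vy_vsum_neg (F : nat -> V3) k :
  (forall j, (j < k)%nat -> vy (F j) <= 0) ->
  (exists j, (j < k)%nat /\ vy (F j) < 0) -> vy (vsum k F) < 0.
Proof.
  induction k; intros H [j [Hj Hn]]. lia.
  simpl.
  destruct (Nat.eq_dec j k) as [->|Hne].
  - assert (vy (vsum k F) <= 0) by (apply vy_vsum_nonpos; intros; apply H; lia). lra.
  - assert (vy (vsum k F) < 0).
    { apply IHk. intros; apply H; lia. exists j; split; [lia|lra]. }
    assert (vy (F k) <= 0) by (apply H; lia). lra.
Qed.

Lemma exists_max (alpha : nat -> R) n : (1 <= n)%nat ->
  exists i, (i < n)%nat /\ forall j, (j < n)%nat -> alpha j <= alpha i.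
Proof.
  induction n; intros Hn. lia.
  destruct (Nat.eq_dec n 0) as [->|Hne].
  - exists 0%nat. split. lia. intros j Hj. assert (j = 0%nat) by lia. subst; lra.
  - destruct IHn as [i [Hi Hm]]. lia.
    destruct (Rle_dec (alpha n) (alpha i)).
    + exists i. split. lia. intros j Hj. destruct (Nat.eq_dec j n). subst; lra.
      apply Hm; lia.
    + exists n. split. lia. intros j Hj. destruct (Nat.eq_dec j n). subst; lra.
      assert (alpha j <= alpha i) by (apply Hm; lia). lra.
Qed.

Theorem mainTheorem17 (n : nat) (m : nat -> R) (omega : R) (alpha : nat -> R) :
  (2 <= n)%nat ->
  (forall i, (i < n)%nat -> 0 < m i) ->
  omega <> 0 ->
  (forall i j, (i < n)%nat -> (j < n)%nat -> i <> j -> alpha i <> alpha j) ->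
  ~ is_solution n m
      (fun i t => mkV3 0 (sinh (omega * t + alpha i)) (cosh (omega * t + alpha i))).
Proof.
  intros Hn Hm Hw Hd [v [a Hs]].
  destruct (exists_max alpha n) as [i [Hi Hmax]]. lia.
  destruct (Hs i Hi) as [Dq [Dv Heq]].
  assert (Hv : forall s, vy (v i s) = omega * cosh (omega * s + alpha i)).
  { intro s. destruct (Dq s) as [_ [Hy _]].
    eapply uniqueness_limite. exact Hy. apply sinh_lin. }
  set (t0 := - alpha i / omega).
  assert (Ht0 : omega * t0 + alpha i = 0) by (unfold t0; field; auto).
  destruct (Dv t0) as [_ [Hy _]].
  assert (Hf : (fun s => vy (v i s)) = (fun s => omega * cosh (omega * s + alpha i))).
  { apply functional_extensionality; intro; apply Hv. }
  rewrite Hf in Hy.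
  assert (Ha : vy (a i t0) = 0).
  { eapply uniqueness_limite. exact Hy.
    replace 0 with (omega * (omega * sinh (omega * t0 + alpha i))).
    apply (derivable_pt_lim_scal (fun s => cosh (omega * s + alpha i))). apply cosh_lin.
    rewrite Ht0, sinh0; ring. }
  destruct (Heq t0) as [_ [_ [_ He]]].
  apply (f_equal vy) in He. rewrite Ha in He. simpl in He. rewrite Ht0, sinh0 in He.
  rewrite Rmult_0_r, Rplus_0_r in He.
  unfold force in He.
  assert (Hneg : vy (vsum n (fun j =>
    if Nat.eqb j i then vzero
    else vscale (m j / Rpower ((lor (mkV3 0 (sinh (omega * t0 + alpha i)) (cosh (omega * t0 + alpha i)))
                                    (mkV3 0 (sinh (omega * t0 + alpha j)) (cosh (omega * t0 + alpha j))))^2 - 1) (3/2))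
                (vadd (mkV3 0 (sinh (omega * t0 + alpha j)) (cosh (omega * t0 + alpha j)))
                      (vscale (lor (mkV3 0 (sinh (omega * t0 + alpha i)) (cosh (omega * t0 + alpha i)))
                                   (mkV3 0 (sinh (omega * t0 + alpha j)) (cosh (omega * t0 + alpha j))))
                              (mkV3 0 (sinh (omega * t0 + alpha i)) (cosh (omega * t0 + alpha i))))))) < 0).
  { assert (Hterm : forall j, (j < n)%nat -> j <> i ->
       vy (vscale (m j / Rpower ((lor (mkV3 0 (sinh (omega * t0 + alpha i)) (cosh (omega * t0 + alpha i)))
                                    (mkV3 0 (sinh (omega * t0 + alpha j)) (cosh (omega * t0 + alpha j))))^2 - 1) (3/2))
                (vadd (mkV3 0 (sinh (omega * t0 + alpha j)) (cosh (omega * t0 + alpha j)))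
                      (vscale (lor (mkV3 0 (sinh (omega * t0 + alpha i)) (cosh (omega * t0 + alpha i)))
                                   (mkV3 0 (sinh (omega * t0 + alpha j)) (cosh (omega * t0 + alpha j))))
                              (mkV3 0 (sinh (omega * t0 + alpha i)) (cosh (omega * t0 + alpha i)))))) < 0).
    { intros j Hj Hji. simpl. rewrite Ht0, sinh0, Rmult_0_r, Rplus_0_r.
      assert (Hlt : alpha j < alpha i).
      { assert (alpha j <= alpha i) by (apply Hmax; auto).
        assert (alpha i <> alpha j) by (apply Hd; auto). lra. }
      assert (Hs0 : sinh (omega * t0 + alpha j) < 0).
      { replace (omega * t0 + alpha j) with (alpha j - alpha i) by lra.
        unfold sinh. assert (exp (alpha j - alpha i) < exp (- (alpha j - alpha i)))
          by (apply exp_increasing; lra). lra. }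
      assert (0 < m j) by auto.
      set (P := Rpower _ _).
      assert (0 < P) by (unfold P, Rpower; apply exp_pos).
      assert (0 < m j / P) by (apply Rdiv_lt_0_compat; auto).
      apply Rmult_pos_neg; auto. }
    apply vy_vsum_neg.
    - intros j Hj. destruct (Nat.eqb_spec j i). simpl; lra.
      left. apply Hterm; auto.
    - destruct (Nat.eq_dec i 0) as [->|Hi0].
      + exists 1%nat. split. lia. replace (Nat.eqb 1 0) with false by reflexivity.
        apply Hterm; lia.
      + exists 0%nat. split. lia. destruct (Nat.eqb_spec 0 i). lia. apply Hterm; lia. }
  rewrite <- He in Hneg. lra.
Qed.
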